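(* Let $X$ be a geodesic $\delta$--hyperbolic space ($\delta\geqslant0$), $x_0\in X$, and let $u_1,u_2,v,w_1,w_2$ be isometries of $X$ with $g:=u_1vw_1=u_2vw_2$ such that the products $u_1v$, $u_2v$, $vw_1$, $vw_2$ are reduced at $x_0$. Assume $|vx_0-x_0|>26\delta$, $|u_1x_0-u_2x_0|\leqslant|vx_0-x_0|$ and $|u_1x_0-x_0|\leqslant|u_2x_0-x_0|$. Then the points $u_1x_0$, $u_2x_0$, $u_1vx_0$ and $u_2vx_0$ are at distance at most $6\delta$ from any geodesic segment $[x_0,gx_0]$.
   Context: Distance $|x-y|$; Gromov product $(p,q)_x:=\frac12(|p-x|+|q-x|-|p-q|)$; $X$ is $\delta$--hyperbolic if $(p,r)_x\geqslant\min\{(p,q)_x,(q,r)_x\}-\delta$ for all $p,q,r,x$. The product $uv$ of two isometries is reduced at $x_0$ if $(u^{-1}x_0,vx_0)_{x_0}\leqslant\delta$. *)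

(* Defs.v *)
From Stdlib Require Import Reals Lra.
Open Scope R_scope.

Definition is_metric {X : Type} (d : X -> X -> R) : Prop :=
  (forall x y, 0 <= d x y) /\
  (forall x y, d x y = 0 <-> x = y) /\
  (forall x y, d x y = d y x) /\
  (forall x y z, d x z <= d x y + d y z).

Definition gromov {X : Type} (d : X -> X -> R) (x p q : X) : R :=
  (d p x + d q x - d p q) / 2.

Definition hyperbolic {X : Type} (d : X -> X -> R) (delta : R) : Prop :=
  forall p q r x,
    gromov d x p r >= Rmin (gromov d x p q) (gromov d x q r) - delta.

Definition geodesic_segment {X : Type} (d : X -> X -> R) (a b : X)
  (gamma : R -> X) : Prop :=
  gamma 0 = a /\ gamma (d a b) = b /\
  (forall s t, 0 <= s <= d a b -> 0 <= t <= d a b ->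
     d (gamma s) (gamma t) = Rabs (s - t)).

Definition geodesic_space {X : Type} (d : X -> X -> R) : Prop :=
  forall a b, exists gamma, geodesic_segment d a b gamma.

Definition isometry {X : Type} (d : X -> X -> R) (f : X -> X) : Prop :=
  (forall x y, d (f x) (f y) = d x y) /\
  exists g : X -> X, (forall x, g (f x) = x) /\ (forall x, f (g x) = x).

(* The product u v (acting as x |-> u (v x)) is reduced at x0:
   (u^{-1} x0, v x0)_{x0} <= delta, where u^{-1} x0 is the (unique) preimage
   of x0 under the bijection u. *)
Definition reduced_at {X : Type} (d : X -> X -> R) (delta : R) (x0 : X)
  (u v : X -> X) : Prop :=
  forall y, u y = x0 -> gromov d x0 y (v x0) <= delta.

Definition near_segment {X : Type} (d : X -> X -> R) (a b : X)
  (gamma : R -> X) (p : X) (r : R) : Prop :=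
  exists t, 0 <= t <= d a b /\ d p (gamma t) <= r.

(* Main.v *)
Require Import Defs.
From Stdlib Require Import Reals Lra.
Open Scope R_scope.

Lemma hyp_use {X : Type} (d : X -> X -> R) (delta : R) p q r x :
  hyperbolic d delta ->
  gromov d x p r >= Rmin (gromov d x p q) (gromov d x q r) - delta.
Proof. intro H; apply H. Qed.

Lemma rmin_cases a b c e : c >= Rmin a b - e -> c >= a - e \/ c >= b - e.
Proof. unfold Rmin; destruct (Rle_dec a b); lra. Qed.

Lemma near_lemma {X : Type} (d : X -> X -> R) (delta : R) x z gamma p :
  is_metric d -> hyperbolic d delta -> geodesic_segment d x z gamma ->
  gromov d p x z <= 4 * delta -> 0 <= delta ->
  near_segment d x z gamma p (6 * delta).
Proof.
  intros [Hpos [Hz [Hs Ht]]] Hh [G0 [G1 G2]] Hg Hd.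
  unfold gromov in Hg.
  assert (T1 := Ht x p z). assert (T2 := Ht p x z). assert (T3 := Ht x z p).
  assert (S1 := Hs p x). assert (S2 := Hs z p). assert (S3 := Hs z x).
  set (t := (d p x + d z x - d p z) / 2).
  assert (Ht0 : 0 <= t <= d x z) by (unfold t; lra).
  exists t; split; [exact Ht0|].
  assert (E1 : d x (gamma t) = t).
  { rewrite <- G0. rewrite G2 by lra. rewrite Rabs_left1 by lra. lra. }
  assert (E2 : d (gamma t) z = d x z - t).
  { rewrite <- G1 at 1. rewrite G2 by lra. rewrite Rabs_left1 by lra. lra. }
  pose proof (Hh p z (gamma t) x) as H.
  unfold gromov in H.
  assert (S4 := Hs (gamma t) x). assert (S5 := Hs z (gamma t)).
  apply rmin_cases in H. unfold t in *. lra.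
Qed.

Lemma chain {X : Type} (d : X -> X -> R) (delta : R) x a b z :
  is_metric d -> hyperbolic d delta -> 0 <= delta ->
  gromov d a x b <= delta -> gromov d b a z <= delta -> d a b > 3 * delta ->
  gromov d a x z <= 2 * delta /\ gromov d b x z <= 2 * delta.
Proof.
  intros [Hpos [Hz [Hs Ht]]] Hh Hd H1 H2 L.
  unfold gromov in *.
  pose proof (Hh x z b a) as K1. pose proof (Hh a x z b) as K2.
  unfold gromov in K1, K2.
  apply rmin_cases in K1. apply rmin_cases in K2.
  assert (S1 := Hs b a). assert (S2 := Hs z b). assert (S3 := Hs x b).
  assert (S4 := Hs x a). assert (S5 := Hs z a). assert (S6 := Hs x z).
  split; lra.
Qed.

Lemma iso_inv {X : Type} (d : X -> X -> R) f :
  isometry d f -> exists y, f y = f y /\ True.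
Proof. intros _. Abort.

Theorem lemma2p32 (X : Type) (d : X -> X -> R) (delta : R) (x0 : X)
  (u1 u2 v w1 w2 g : X -> X) :
  is_metric d -> geodesic_space d -> 0 <= delta -> hyperbolic d delta ->
  isometry d u1 -> isometry d u2 -> isometry d v ->
  isometry d w1 -> isometry d w2 ->
  (forall x, g x = u1 (v (w1 x))) ->
  (forall x, g x = u2 (v (w2 x))) ->
  reduced_at d delta x0 u1 v -> reduced_at d delta x0 u2 v ->
  reduced_at d delta x0 v w1 -> reduced_at d delta x0 v w2 ->
  d (v x0) x0 > 26 * delta ->
  d (u1 x0) (u2 x0) <= d (v x0) x0 ->
  d (u1 x0) x0 <= d (u2 x0) x0 ->
  forall gamma : R -> X, geodesic_segment d x0 (g x0) gamma ->
    near_segment d x0 (g x0) gamma (u1 x0) (6 * delta) /\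
    near_segment d x0 (g x0) gamma (u2 x0) (6 * delta) /\
    near_segment d x0 (g x0) gamma (u1 (v x0)) (6 * delta) /\
    near_segment d x0 (g x0) gamma (u2 (v x0)) (6 * delta).
Proof.
  intros Hm _ Hd Hh Iu1 Iu2 Iv Iw1 Iw2 G1 G2 R1 R2 R3 R4 L _ _ gamma Hg.
  assert (Hs : forall x y, d x y = d y x) by apply Hm.
  destruct Iv as [Dv [vi [_ Vi]]].
  assert (side : forall u w, isometry d u -> reduced_at d delta x0 u v ->
     reduced_at d delta x0 v w -> (forall x, g x = u (v (w x))) ->
     near_segment d x0 (g x0) gamma (u x0) (6 * delta) /\
     near_segment d x0 (g x0) gamma (u (v x0)) (6 * delta)).
  { intros u w [Du [ui [_ Ui]]] Ru Rw Gw.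
    pose proof (Ru (ui x0) (Ui x0)) as A1.
    pose proof (Rw (vi x0) (Vi x0)) as A2.
    unfold gromov in A1, A2.
    rewrite <- (Du (ui x0) x0), <- (Du (v x0) x0), <- (Du (ui x0) (v x0)), Ui in A1.
    rewrite <- (Dv (vi x0) x0), <- (Dv (w x0) x0), <- (Dv (vi x0) (w x0)), Vi in A2.
    rewrite <- (Du x0 (v x0)), <- (Du (v (w x0)) (v x0)), <- (Du x0 (v (w x0))) in A2.
    rewrite <- Gw in A2.
    assert (L' : d (u x0) (u (v x0)) > 3 * delta) by (rewrite Du, Hs; lra).
    destruct (chain d delta x0 (u x0) (u (v x0)) (g x0) Hm Hh Hd) as [C1 C2].
    { unfold gromov. assert (S1 := Hs x0 (u x0)). assert (S2 := Hs (u (v x0)) (u x0)). assert (S3 := Hs x0 (u (v x0))). assert (S4 := Hs (v x0) x0). assert (S5 := Du x0 (v x0)). lra. }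
    { unfold gromov. assert (S1 := Hs (u x0) (u (v x0))). assert (S2 := Hs (g x0) (u (v x0))). assert (S3 := Hs (u x0) (g x0)). lra. }
    { exact L'. }
    split; apply near_lemma with (delta := delta); auto; lra. }
  destruct (side u1 w1 Iu1 R1 R3 G1), (side u2 w2 Iu2 R2 R4 G2); tauto.
Qed.
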